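(* Let $V$ be a finite set and $\mathcal{F}\subseteq 2^V$ a minimal hereditary family with $\delta(\mathcal{F})\ge 12$. Then every $F\in\mathcal{F}$ satisfies $|F|\le 4$.
   Context: A family $\mathcal{F}\subseteq 2^V$ is hereditary if $F'\subseteq F\in\mathcal{F}$ implies $F'\in\mathcal{F}$. For $x\in V$, $d_{\mathcal{F}}(x)=|\{F\in\mathcal{F}: x\in F\}|$ and $\delta(\mathcal{F})=\min_{x\in V}d_{\mathcal{F}}(x)$. A set $F\in\mathcal{F}$ is maximal if no other member of $\mathcal{F}$ strictly contains it. A hereditary family $\mathcal{F}$ with $\delta(\mathcal{F})\ge 12$ is called minimal if for every maximal $F\in\mathcal{F}$ we have $\delta(\mathcal{F}\setminus\{F\})\le 11$. *)

(* Defs.v *)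
From mathcomp Require Import all_boot.
Set Implicit Arguments. Unset Strict Implicit. Unset Printing Implicit Defensive.

Definition hereditary (V : finType) (F : {set {set V}}) : Prop :=
  forall A B : {set V}, A \subset B -> B \in F -> A \in F.

Definition deg (V : finType) (F : {set {set V}}) (x : V) : nat :=
  #|[set A in F | x \in A]|.

Definition mindeg_ge (V : finType) (F : {set {set V}}) (k : nat) : Prop :=
  forall x : V, k <= deg F x.

Definition mindeg_le (V : finType) (F : {set {set V}}) (k : nat) : Prop :=
  exists x : V, deg F x <= k.

Definition maximal_in (V : finType) (F : {set {set V}}) (A : {set V}) : Prop :=
  A \in F /\ forall B : {set V}, B \in F -> A \subset B -> B = A.

Definition minimal12 (V : finType) (F : {set {set V}}) : Prop :=
  [/\ hereditary F, mindeg_ge F 12 &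
      forall A : {set V}, maximal_in F A -> mindeg_le (F :\ A) 11].

(* Main.v *)
Require Import Defs.
From mathcomp Require Import all_boot.


Lemma exists_max (V : finType) (F : {set {set V}}) (A : {set V}) :
  A \in F -> exists B, maximal_in F B /\ A \subset B.
Proof.
move=> AF.
have P0 : (A \in F) && (A \subset A) by rewrite AF subxx.
case: (@arg_maxnP _ A (fun B : {set V} => (B \in F) && (A \subset B)) (fun B : {set V} => #|B|) P0) => B /andP[BF AB] Bmax.
exists B; split => //; split => // C CF BC.
apply/eqP; rewrite eq_sym eqEcard BC /=.
apply: Bmax; rewrite CF /=; exact: subset_trans AB BC.
Qed.

Theorem mainTheorem5 (V : finType) (F : {set {set V}}) :
  minimal12 F -> forall A : {set V}, A \in F -> #|A| <= 4.
Proof.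
case=> her deg12 minl A AF.
rewrite leqNgt; apply/negP => A5.
have [B [[BF Bmax] AB]] := exists_max _ _ _ AF.
have B5 : 4 < #|B| by apply: leq_trans A5 (subset_leq_card AB).
have [x degx] := minl B (conj BF Bmax).
move: degx; rewrite /deg.
case xB : (x \in B); last first.
  have -> : [set C in F :\ B | x \in C] = [set C in F | x \in C].
    apply/setP => C; rewrite !inE; case: (eqVneq C B) => [->|] //=; by rewrite xB !andbF.
  by move/(leq_trans (deg12 x)).
set S := [set x |: C | C in powerset (B :\ x)].
have cS : #|S| = 2 ^ #|B :\ x|.
  rewrite card_in_imset ?card_powerset //.
  move=> C1 C2; rewrite !inE => s1 s2 e.
  have n1 : x \notin C1 by apply/negP => /(subsetP s1); rewrite !inE eqxx.
  have n2 : x \notin C2 by apply/negP => /(subsetP s2); rewrite !inE eqxx.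
  by rewrite -(setU1K n1) -(setU1K n2) e.
have sub : S :\ B \subset [set C in F :\ B | x \in C].
  apply/subsetP => C; rewrite !inE => /andP[nB /imsetP[D]].
  rewrite inE => DB eC; move: nB; rewrite eC setU11 andbT => -> /=.
  apply: (her _ _ _ BF); rewrite subUset sub1set xB /=.
  exact: subset_trans DB (subD1set _ _).
move/(leq_trans (subset_leq_card sub)).
have := cardsD1 B S.
have bx : #|B :\ x| >= 4 by move: B5; rewrite (cardsD1 x B) xB.
have : 2 ^ 4 <= 2 ^ #|B :\ x| by rewrite leq_exp2l.
rewrite -cS => h1 h2 h3.
have h4 : 16 <= (B \in S) + #|S :\ B| by rewrite -h2.
move: h4; case: (B \in S) => /= h4.
  have h5 : 1 + #|S :\ B| <= 12 by rewrite leq_add2l.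
  by have := leq_trans h4 h5.
by have := leq_trans h4 h3.
Qed.
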